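(* Let $m$, $\alpha$, $\bar R>1/\sqrt2$, $\Omega$ be as in the context, let $E\in C^{0,\alpha}_\ast(\Omega)$ and let $v\in C^{2,\alpha}_\ast(\Omega)$ be the solution of $\Delta v-\xi\cdot\nabla v+v=E$ in $\Omega$, $v|_{\partial\Omega}=0$. Then for all $\xi\in\Omega$, $$|v(\xi)|\le k|\xi|,\qquad k=\frac{\sup_{\eta\in\Omega}|E(\eta)|\,|\eta|}{2\bar R^2-1}.$$
   Context: $\Omega=\mathbf R^2\setminus B_{\bar R}$ with $B_{\bar R}$ the open disk of radius $\bar R$ at the origin; $m\ge1$ integer, $\alpha\in(0,1)$. For $\xi\in\Omega$, $B(\xi)$ is the unit ball about $\xi$, $[g]_{\alpha,B}$ the Hölder seminorm on $B$. For $r=0,2$, $\|v:C^{r,\alpha}_\ast(\Omega)\|=\max\big(\max_{0\le j\le r}\sup_\Omega|D^jv(\xi)||\xi|^{-r+1+j},\ \sup_\Omega[D^rv]_{\alpha,B(\xi)\cap\Omega}|\xi|^{1+\alpha}\big)$, and $C^{r,\alpha}_\ast(\Omega)$ is the space of $C^{r,\alpha}_{loc}$ functions with finite norm satisfying $v(x,-y)=-v(x,y)$ and $v(\rho_k\xi)=v(\xi)$ for all $k\in\mathbf Z$, $\rho_k$ being the reflection across the line through the origin at angle $\frac{\pi}{2m}+\frac{k\pi}{m}$ with the $x$-axis. *)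

(* Defs.v *)
From Stdlib Require Import Reals Lra.
Open Scope R_scope.

Definition nrm (x y : R) : R := sqrt (x * x + y * y).
Definition dist2 (x1 y1 x2 y2 : R) : R := nrm (x1 - x2) (y1 - y2).

Definition inOmega (Rb x y : R) : Prop := Rb * Rb <= x * x + y * y.
Definition inInt (Rb x y : R) : Prop := Rb * Rb < x * x + y * y.
Definition onBdry (Rb x y : R) : Prop := x * x + y * y = Rb * Rb.

Definition cont_on (f : R -> R -> R) (U : R -> R -> Prop) : Prop :=
  forall x y, U x y -> forall eps, 0 < eps -> exists delta, 0 < delta /\
    forall x' y', U x' y' -> dist2 x' y' x y < delta ->
      Rabs (f x' y' - f x y) < eps.

Definition is_dx (f g : R -> R -> R) (U : R -> R -> Prop) : Prop :=
  forall x y, U x y -> derivable_pt_lim (fun t => f t y) x (g x y).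
Definition is_dy (f g : R -> R -> R) (U : R -> R -> Prop) : Prop :=
  forall x y, U x y -> derivable_pt_lim (fun t => f x t) y (g x y).

Definition wbounded (Rb w : R) (P : R -> R -> Prop) (g : R -> R -> R) : Prop :=
  exists C, forall x y, P x y -> Rabs (g x y) * Rpower (nrm x y) w <= C.

Definition wholder (Rb alpha : R) (P : R -> R -> Prop) (g : R -> R -> R) : Prop :=
  exists C, forall x y, inOmega Rb x y ->
    forall a1 a2 b1 b2, P a1 a2 -> P b1 b2 ->
      dist2 a1 a2 x y < 1 -> dist2 b1 b2 x y < 1 ->
      Rabs (g a1 a2 - g b1 b2) * Rpower (nrm x y) (1 + alpha)
        <= C * Rpower (dist2 a1 a2 b1 b2) alpha.

(* reflection rho_k across the line through 0 at angle pi/(2m) + k pi/m *)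
Definition rho_ang (m : nat) (k : Z) : R := (1 + 2 * IZR k) * PI / INR m.
Definition rho_x (m : nat) (k : Z) (x y : R) : R :=
  cos (rho_ang m k) * x + sin (rho_ang m k) * y.
Definition rho_y (m : nat) (k : Z) (x y : R) : R :=
  sin (rho_ang m k) * x - cos (rho_ang m k) * y.

Definition symm (Rb : R) (m : nat) (f : R -> R -> R) : Prop :=
  (forall x y, inOmega Rb x y -> f x (- y) = - f x y) /\
  (forall (k : Z) x y, inOmega Rb x y -> f (rho_x m k x y) (rho_y m k x y) = f x y).

Definition C0a_star (Rb alpha : R) (m : nat) (E : R -> R -> R) : Prop :=
  cont_on E (inOmega Rb) /\
  wbounded Rb 1 (inOmega Rb) E /\
  wholder Rb alpha (inOmega Rb) E /\
  symm Rb m E.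

Definition C2a_star (Rb alpha : R) (m : nat)
    (v vx vy vxx vxy vyx vyy : R -> R -> R) : Prop :=
  let I := inInt Rb in
  is_dx v vx I /\ is_dy v vy I /\
  is_dx vx vxx I /\ is_dy vx vxy I /\ is_dx vy vyx I /\ is_dy vy vyy I /\
  cont_on v (inOmega Rb) /\
  cont_on vx I /\ cont_on vy I /\
  cont_on vxx I /\ cont_on vxy I /\ cont_on vyx I /\ cont_on vyy I /\
  wbounded Rb (-1) (inOmega Rb) v /\
  wbounded Rb 0 I vx /\ wbounded Rb 0 I vy /\
  wbounded Rb 1 I vxx /\ wbounded Rb 1 I vxy /\
  wbounded Rb 1 I vyx /\ wbounded Rb 1 I vyy /\
  wholder Rb alpha I vxx /\ wholder Rb alpha I vxy /\
  wholder Rb alpha I vyx /\ wholder Rb alpha I vyy /\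
  symm Rb m v.

(* Main.v *)
Require Import Defs.
From Stdlib Require Import Reals Lra ClassicalEpsilon.
From Coquelicot Require Import Coquelicot.
Open Scope R_scope.
Definition C2 (f : R -> R -> R) x y := continuous (fun q : R*R => f (fst q) (snd q)) (x,y).
Lemma C2_eps f x y : C2 f x y -> forall eps, 0 < eps -> exists d, 0 < d /\
  forall a b, Rabs (a - x) < d -> Rabs (b - y) < d -> Rabs (f a b - f x y) < eps.
Proof.
  intros H eps He. unfold C2, continuous in H.
  rewrite filterlim_locally in H. destruct (H (mkposreal _ He)) as [d Hd].
  exists d. split. apply cond_pos. intros a b Ha Hb.
  apply (Hd (a,b)). split; assumption.
Qed.
Lemma eps_cpt (G : R -> R) x0 : (forall eps, 0 < eps -> exists alp, 0 < alp /\
  forall x, Rabs (x - x0) < alp -> Rabs (G x - G x0) < eps) -> continuity_pt G x0.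
Proof.
  intros H. unfold continuity_pt, continue_in, limit1_in, limit_in. simpl. unfold R_dist.
  intros eps He. destruct (H eps He) as [alp [Ha H']]. exists alp. split; auto.
  intros x [_ Hx]. apply H'; auto.
Qed.

Lemma unif2 (f : R -> R -> R) a b c d : (forall x y, C2 f x y) -> forall eps, 0 < eps ->
  exists dd, 0 < dd /\ forall x y x' y', a <= x <= b -> c <= y <= d ->
   Rabs (x' - x) < dd -> Rabs (y' - y) < dd -> Rabs (f x' y' - f x y) < eps.
Proof.
  intros Hc eps He.
  assert (He2 : 0 < eps/2) by lra.
  assert (Hex : forall t u, {dl : R | 0 < dl /\ forall a b, Rabs (a - t) < dl ->
      Rabs (b - u) < dl -> Rabs (f a b - f t u) < eps/2}).
  { intros t u. apply constructive_indefinite_description. apply C2_eps; auto. }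
  assert (Hpos : forall t u, 0 < proj1_sig (Hex t u) / 2).
  { intros t u. pose proof (proj2_sig (Hex t u)) as [Hh _]. simpl in Hh. lra. }
  destruct (compactness_value_2d a b c d (fun t u => mkposreal _ (Hpos t u))) as [dd Hdd].
  exists dd. split. apply cond_pos.
  intros x y x' y' Hx Hy H1 H2.
  destruct (Rlt_dec (Rabs (f x' y' - f x y)) eps) as [Hl|Hl]; auto. exfalso.
  apply (Hdd x y Hx Hy). intros [t [u [Ht [Hu [Hxt [Hyu Hd]]]]]].
  simpl in Hxt, Hyu, Hd. destruct (proj2_sig (Hex t u)) as [Hdl Hp]. set (dl := proj1_sig (Hex t u)) in *.
  assert (A1 : Rabs (f x y - f t u) < eps/2) by (apply Hp; lra).
  assert (A2 : Rabs (f x' y' - f t u) < eps/2).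
  { apply Hp.
    - replace (x' - t) with ((x' - x) + (x - t)) by ring.
      eapply Rle_lt_trans. apply Rabs_triang. lra.
    - replace (y' - u) with ((y' - y) + (y - u)) by ring.
      eapply Rle_lt_trans. apply Rabs_triang. lra. }
  apply Hl. apply Rabs_def2 in A1. apply Rabs_def2 in A2. apply Rabs_def1; lra.
Qed.

Lemma evt2 (f : R -> R -> R) a b c d : a <= b -> c <= d -> (forall x y, C2 f x y) ->
  exists x0 y0, a <= x0 <= b /\ c <= y0 <= d /\
   forall x y, a <= x <= b -> c <= y <= d -> f x y <= f x0 y0.
Proof.
  intros Hab Hcd Hc.
  assert (Hsl : forall x, exists y, c <= y <= d /\ forall y', c <= y' <= d -> f x y' <= f x y).
  { intros x. destruct (continuity_ab_maj (fun y => f x y) c d Hcd) as [M [HM1 HM2]].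
    - intros y _. apply eps_cpt. intros eps He.
      destruct (C2_eps f x y (Hc x y) eps He) as [dl [Hdl Hp]].
      exists dl. split; auto. intros y' Hy'. apply Hp; auto.
      rewrite Rminus_diag, Rabs_R0. auto.
    - exists M. split; auto. }
  set (ys := fun x => proj1_sig (constructive_indefinite_description _ (Hsl x))).
  assert (Hys : forall x, c <= ys x <= d /\ forall y', c <= y' <= d -> f x y' <= f x (ys x)).
  { intros x. unfold ys. destruct (constructive_indefinite_description _ (Hsl x)). simpl. auto. }
  set (G := fun x => f x (ys x)).
  destruct (continuity_ab_maj G a b Hab) as [M [HM1 HM2]].
  - intros x0 Hx0. apply eps_cpt. intros eps He.
    destruct (unif2 f (a-1) (b+1) c d Hc eps He) as [dd [Hdd Hu]].
    exists (Rmin dd 1). split. apply Rmin_pos; lra.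
    intros x Hx. assert (Hx1 : Rabs (x - x0) < dd) by (eapply Rlt_le_trans; [apply Hx| apply Rmin_l]).
    assert (Hx2 : Rabs (x - x0) < 1) by (eapply Rlt_le_trans; [apply Hx| apply Rmin_r]).
    assert (Hxr : a - 1 <= x <= b + 1) by (apply Rabs_def2 in Hx2; lra).
    destruct (Hys x) as [Hyx Hmx]. destruct (Hys x0) as [Hyx0 Hmx0].
    assert (B1 : Rabs (f x (ys x0) - f x0 (ys x0)) < eps).
    { apply Hu; try lra. rewrite Rminus_diag, Rabs_R0; lra. }
    assert (B2 : Rabs (f x0 (ys x) - f x (ys x)) < eps).
    { apply Hu; try lra. rewrite <- Rabs_Ropp. replace (- (x0 - x)) with (x - x0) by ring. auto.
      rewrite Rminus_diag, Rabs_R0; lra. }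
    specialize (Hmx (ys x0) Hyx0). specialize (Hmx0 (ys x) Hyx).
    unfold G. apply Rabs_def2 in B1. apply Rabs_def2 in B2. apply Rabs_def1; lra.
  - exists M, (ys M). destruct (Hys M) as [H1 H2]. split; auto. split; auto.
    intros x y Hx Hy. destruct (Hys x) as [_ H3]. specialize (H3 y Hy).
    specialize (HM1 x Hx). unfold G in HM1. lra.
Qed.

Lemma cS (p : R*R) : continuous (fun q : R*R => fst q * fst q + snd q * snd q) p.
Proof.
  apply (continuous_plus (fun q : R*R => fst q * fst q) (fun q : R*R => snd q * snd q)).
  apply (continuous_mult (fun q : R*R => fst q) (fun q : R*R => fst q)); apply continuous_fst.
  apply (continuous_mult (fun q : R*R => snd q) (fun q : R*R => snd q)); apply continuous_snd.
Qed.
Lemma cR (f : R -> R) (h : R*R -> R) p : continuous h p -> continuity_pt f (h p) ->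
  continuous (fun q => f (h q)) p.
Proof. intros H1 H2. apply continuous_comp; auto. apply continuity_pt_filterlim; auto. Qed.
Lemma cN (p : R*R) : 0 < fst p * fst p + snd p * snd p -> continuous (fun q : R*R => nrm (fst q) (snd q)) p.
Proof. intros H. unfold nrm. apply (cR sqrt (fun q : R*R => fst q * fst q + snd q * snd q)).
  apply cS. apply continuity_pt_sqrt. lra. Qed.
Lemma cInvN (p : R*R) : 0 < fst p * fst p + snd p * snd p -> continuous (fun q : R*R => / nrm (fst q) (snd q)) p.
Proof. intros H. apply (cR Rinv (fun q : R*R => nrm (fst q) (snd q))). apply cN; auto.
  apply continuity_pt_inv. apply continuity_pt_id. unfold nrm. apply Rgt_not_eq, sqrt_lt_R0. lra. Qed.

Lemma sdt (h h' : R -> R) h2 t0 d : 0 < d ->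
  (forall t, Rabs (t - t0) < d -> derivable_pt_lim h t (h' t)) ->
  derivable_pt_lim h' t0 h2 ->
  (forall t, Rabs (t - t0) < d -> h t <= h t0) -> h' t0 = 0 /\ h2 <= 0.
Proof.
  intros Hd Hder Hder2 Hmax.
  assert (Hz : h' t0 = 0).
  { assert (pr : derivable_pt h t0).
    { exists (h' t0). apply Hder. rewrite Rminus_diag, Rabs_R0; lra. }
    pose proof (deriv_maximum h (t0 - d) (t0 + d) t0 pr ltac:(lra) ltac:(lra)) as Hm.
    rewrite <- Hm.
    - symmetry. apply derive_pt_eq_0. apply Hder. rewrite Rminus_diag, Rabs_R0; lra.
    - intros x H1 H2. apply Hmax. apply Rabs_def1; lra. }
  split; auto.
  destruct (Rle_dec h2 0) as [Hl|Hl]; auto. exfalso.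
  assert (Hh2 : 0 < h2) by lra.
  destruct (Hder2 (h2/2) ltac:(lra)) as [del Hdel].
  assert (Hpos : forall s, 0 < s -> s < del -> 0 < h' (t0 + s)).
  { intros s H1 H2. specialize (Hdel s ltac:(lra) ltac:(rewrite Rabs_right; lra)).
    rewrite Hz in Hdel. apply Rabs_def2 in Hdel. destruct Hdel as [_ Hdel].
    assert (0 < (h' (t0 + s) - 0) / s) by lra.
    replace (h' (t0 + s)) with (((h' (t0 + s) - 0) / s) * s) by (field; lra).
    apply Rmult_lt_0_compat; lra. }
  set (s := Rmin del d / 2).
  assert (Hs0 : 0 < s) by (unfold s; pose proof (cond_pos del); unfold Rmin; destruct Rle_dec; lra).
  assert (Hs1 : s < del) by (unfold s; pose proof (Rmin_l del d); pose proof (cond_pos del); lra).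
  assert (Hs2 : s < d) by (unfold s; pose proof (Rmin_r del d); lra).
  destruct (MVT_cor2 h h' t0 (t0 + s) ltac:(lra)) as [c [Hc1 Hc2]].
  { intros c Hc. apply Hder. apply Rabs_def1; lra. }
  specialize (Hpos (c - t0) ltac:(lra) ltac:(lra)). replace (t0 + (c - t0)) with c in Hpos by ring.
  specialize (Hmax (t0 + s) ltac:(rewrite Rabs_right; replace (t0 + s - t0) with s by ring; lra)).
  assert (0 < h' c * (t0 + s - t0)) by (apply Rmult_lt_0_compat; lra). lra.
Qed.

Section G.
Variables (kp ep Rb : R).
Definition g x y := kp * (nrm x y - Rb*Rb / nrm x y) + ep * (x*x+y*y).
Definition gx x y := kp * (x / nrm x y + Rb*Rb*x / (nrm x y ^ 3)) + 2*ep*x.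
Definition gxx x y := kp * (1/nrm x y - x*x/nrm x y ^ 3 + Rb*Rb/nrm x y ^3 - 3*Rb*Rb*x*x/nrm x y ^5) + 2*ep.
Definition gy x y := kp * (y / nrm x y + Rb*Rb*y / (nrm x y ^ 3)) + 2*ep*y.
Definition gyy x y := kp * (1/nrm x y - y*y/nrm x y ^ 3 + Rb*Rb/nrm x y ^3 - 3*Rb*Rb*y*y/nrm x y ^5) + 2*ep.

Ltac gsolve x y := apply is_derive_Reals; unfold g, gx, gy, gxx, gyy, nrm;
  assert (Hr : 0 < sqrt (x*x+y*y)) by (apply sqrt_lt_R0; lra);
  auto_derive;
  [ set (r := sqrt (x*x+y*y)) in *; repeat split; try lra; try apply Rgt_not_eq; try (unfold Rgt; repeat apply Rmult_lt_0_compat; lra)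
  | set (r := sqrt (x*x+y*y)) in *; field; lra ].
Lemma g_dx x y : 0 < x*x+y*y -> derivable_pt_lim (fun t => g t y) x (gx x y).
Proof. intros H. gsolve x y. Qed.
Lemma g_dy x y : 0 < x*x+y*y -> derivable_pt_lim (fun t => g x t) y (gy x y).
Proof. intros H. gsolve x y. Qed.
Lemma g_dxx x y : 0 < x*x+y*y -> derivable_pt_lim (fun t => gx t y) x (gxx x y).
Proof. intros H. gsolve x y. Qed.
Lemma g_dyy x y : 0 < x*x+y*y -> derivable_pt_lim (fun t => gy x t) y (gyy x y).
Proof. intros H. gsolve x y. Qed.

Lemma Lg_eq x y : 0 < x*x+y*y ->
  gxx x y + gyy x y - (x * gx x y + y * gy x y) + g x y =
  kp*(1-2*Rb*Rb)/nrm x y - kp*Rb*Rb/(nrm x y ^ 3) + ep*(4 - nrm x y * nrm x y).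
Proof.
  intros H. unfold g, gx, gy, gxx, gyy, nrm.
  assert (Hr : 0 < sqrt (x*x+y*y)) by (apply sqrt_lt_R0; lra).
  assert (hs : x*x+y*y = sqrt (x*x+y*y) * sqrt (x*x+y*y)) by (rewrite sqrt_sqrt; lra).
  set (r := sqrt (x*x+y*y)) in *.
  transitivity (kp*(2/r - (x*x+y*y)/r^3 + 2*Rb*Rb/r^3 - 3*Rb*Rb*(x*x+y*y)/r^5) + 4*ep
     - (kp*((x*x+y*y)/r + Rb*Rb*(x*x+y*y)/r^3) + 2*ep*(x*x+y*y))
     + (kp * (r - Rb*Rb / r) + ep * (x*x+y*y))).
  { field. lra. }
  rewrite hs. field. lra.
Qed.
End G.

Lemma cg kp ep Rb (p : R*R) : 0 < fst p * fst p + snd p * snd p ->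
  continuous (fun q : R*R => g kp ep Rb (fst q) (snd q)) p.
Proof.
  intros H. unfold g.
  apply (continuous_plus (fun q : R*R => kp * (nrm (fst q) (snd q) - Rb*Rb / nrm (fst q) (snd q)))
                         (fun q : R*R => ep * (fst q * fst q + snd q * snd q))).
  - apply (continuous_mult (fun _ : R*R => kp)). apply continuous_const.
    apply (continuous_minus (fun q : R*R => nrm (fst q) (snd q)) (fun q : R*R => Rb*Rb / nrm (fst q) (snd q))).
    apply cN; auto.
    apply (continuous_mult (fun _ : R*R => Rb*Rb)). apply continuous_const. apply cInvN; auto.
  - apply (continuous_mult (fun _ : R*R => ep)). apply continuous_const. apply cS.
Qed.

Lemma eps_C2 f x y : (forall eps, 0 < eps -> exists d, 0 < d /\
  forall a b, Rabs (a - x) < d -> Rabs (b - y) < d -> Rabs (f a b - f x y) < eps) -> C2 f x y.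
Proof.
  intros H. unfold C2, continuous. apply filterlim_locally. intros eps.
  destruct (H eps (cond_pos eps)) as [d [Hd H']]. exists (mkposreal _ Hd).
  intros [a b] [Ha Hb]. apply H'; assumption.
Qed.
Lemma loc2 (P : R*R -> Prop) x y : (exists d, 0 < d /\ forall a b, Rabs (a - x) < d ->
  Rabs (b - y) < d -> P (a,b)) -> locally (x,y) P.
Proof. intros [d [Hd H]]. exists (mkposreal d Hd). intros [a b] [Ha Hb]. apply H; auto. Qed.

Lemma dist_lt u w e : Rabs u < e -> Rabs w < e -> nrm u w < 2 * e.
Proof.
  intros H1 H2. unfold nrm.
  assert (0 <= Rabs u) by apply Rabs_pos. assert (0 <= Rabs w) by apply Rabs_pos.
  assert (Hu : u * u = Rabs u * Rabs u) by (rewrite <- Rabs_mult; rewrite Rabs_right; [ring| nra]).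
  assert (Hw : w * w = Rabs w * Rabs w) by (rewrite <- Rabs_mult; rewrite Rabs_right; [ring| nra]).
  rewrite <- (sqrt_square (2*e)) by lra.
  apply sqrt_lt_1_alt. split. nra. rewrite Hu, Hw. nra.
Qed.

Lemma comp_le u w : Rabs u <= nrm u w /\ Rabs w <= nrm u w.
Proof.
  unfold nrm. rewrite <- !sqrt_Rsqr_abs. unfold Rsqr. split; apply sqrt_le_1_alt; nra.
Qed.

Lemma cS2 x y : C2 (fun a b => a*a+b*b) x y.
Proof. apply (cS (x,y)). Qed.

Lemma s_near_gt c x y : c < x*x+y*y -> exists d, 0 < d /\ forall a b, Rabs (a - x) < d ->
  Rabs (b - y) < d -> c < a*a+b*b.
Proof.
  intros H. destruct (C2_eps _ _ _ (cS2 x y) (x*x+y*y - c) ltac:(lra)) as [d [Hd Hp]].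
  exists d; split; auto. intros a b Ha Hb. specialize (Hp a b Ha Hb).
  apply Rabs_def2 in Hp. lra.
Qed.
Lemma s_near_lt c x y : x*x+y*y < c -> exists d, 0 < d /\ forall a b, Rabs (a - x) < d ->
  Rabs (b - y) < d -> a*a+b*b < c.
Proof.
  intros H. destruct (C2_eps _ _ _ (cS2 x y) (c - (x*x+y*y)) ltac:(lra)) as [d [Hd Hp]].
  exists d; split; auto. intros a b Ha Hb. specialize (Hp a b Ha Hb).
  apply Rabs_def2 in Hp. lra.
Qed.

Lemma cont_rel_near (n : R -> R -> R) Rb x y : cont_on n (inOmega Rb) -> inOmega Rb x y ->
  forall eps, 0 < eps -> exists d, 0 < d /\ forall a b, inOmega Rb a b -> Rabs (a - x) < d ->
  Rabs (b - y) < d -> Rabs (n a b - n x y) < eps.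
Proof.
  intros Hc Hxy eps He. destruct (Hc x y Hxy eps He) as [dl [Hdl Hp]].
  exists (dl/2). split. lra. intros a b Hab Ha Hb. apply Hp; auto.
  unfold dist2. pose proof (dist_lt (a - x) (b - y) (dl/2) Ha Hb). lra.
Qed.

Lemma cont_int (n : R -> R -> R) Rb x y : cont_on n (inOmega Rb) -> inInt Rb x y -> C2 n x y.
Proof.
  intros Hc Hxy. apply eps_C2. intros eps He.
  destruct (s_near_gt (Rb*Rb) x y Hxy) as [d1 [Hd1 H1]].
  destruct (cont_rel_near n Rb x y Hc ltac:(unfold inOmega, inInt in *; lra) eps He) as [d2 [Hd2 H2]].
  exists (Rmin d1 d2). split. apply Rmin_pos; auto.
  intros a b Ha Hb. pose proof (Rmin_l d1 d2). pose proof (Rmin_r d1 d2).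
  apply H2; try lra. unfold inOmega. left. apply H1; lra.
Qed.
Definition Fq (Rb : R) (n : R -> R -> R) x y :=
  if Rlt_dec 0 y then if Rlt_dec (Rb*Rb) (x*x+y*y) then Rmax (n x y / y) 0 else 0 else 0.

Lemma F_D Rb n x y : 0 < y -> Rb*Rb < x*x+y*y -> Fq Rb n x y = Rmax (n x y / y) 0.
Proof. intros H1 H2. unfold Fq. destruct Rlt_dec; [|lra]. destruct Rlt_dec; [|lra]. auto. Qed.
Lemma F_nD Rb n x y : ~ (0 < y /\ Rb*Rb < x*x+y*y) -> Fq Rb n x y = 0.
Proof. intros H. unfold Fq. destruct Rlt_dec; auto. destruct Rlt_dec; auto. tauto. Qed.

Lemma Rmax_eq u : Rmax u 0 = (u + Rabs u) * / 2.
Proof. unfold Rmax, Rabs. destruct Rle_dec; destruct Rcase_abs; field_simplify; lra. Qed.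

Lemma cmax (n : R -> R -> R) x y : C2 n x y -> y <> 0 ->
  C2 (fun a b => Rmax (n a b / b) 0) x y.
Proof.
  intros Hn Hy. unfold C2.
  apply (continuous_ext (fun q : R*R => (n (fst q) (snd q) * / snd q + Rabs (n (fst q) (snd q) * / snd q)) * / 2)).
  { intros q. rewrite Rmax_eq. reflexivity. }
  assert (Hp : continuous (fun q : R*R => n (fst q) (snd q) * / snd q) (x,y)).
  { apply (continuous_mult (fun q : R*R => n (fst q) (snd q)) (fun q : R*R => / snd q)).
    apply Hn. apply (cR Rinv (fun q : R*R => snd q)). apply continuous_snd.
    apply continuity_pt_inv. apply continuity_pt_id. simpl. auto. }
  apply (continuous_mult (fun q : R*R => n (fst q) (snd q) * / snd q + Rabs (n (fst q) (snd q) * / snd q)) (fun _ : R*R => / 2)).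
  all: try apply continuous_const.
  apply (continuous_plus (fun q : R*R => n (fst q) (snd q) * / snd q) (fun q : R*R => Rabs (n (fst q) (snd q) * / snd q))).
    apply Hp. apply (continuous_comp (fun q : R*R => n (fst q) (snd q) * / snd q) Rabs). apply Hp. apply continuous_Rabs.
Qed.

Lemma zero_C2 (f : R -> R -> R) x y : (exists d, 0 < d /\ forall a b, Rabs (a - x) < d ->
  Rabs (b - y) < d -> f a b = 0) -> C2 f x y.
Proof.
  intros [d [Hd H]]. apply eps_C2. intros eps He. exists d. split; auto.
  intros a b Ha Hb. rewrite H, (H x y); try (rewrite Rminus_diag, Rabs_R0; lra); auto.
Qed.

Lemma F_cont Rb (n : R -> R -> R) : cont_on n (inOmega Rb) ->
  (forall x y, inOmega Rb x y -> (y = 0 \/ onBdry Rb x y) -> n x y < 0) ->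
  forall x y, C2 (Fq Rb n) x y.
Proof.
  intros Hc Hbd x y.
  destruct (Rlt_dec 0 y) as [Hy|Hy]; [destruct (Rlt_dec (Rb*Rb) (x*x+y*y)) as [Hs|Hs]|].
  -
    assert (HC : C2 (fun a b => Rmax (n a b / b) 0) x y).
    { apply cmax. apply (cont_int n Rb); auto. lra. }
    unfold C2 in *. eapply continuous_ext_loc; [|apply HC].
    apply loc2. destruct (s_near_gt (Rb*Rb) x y Hs) as [d [Hd H]].
    exists (Rmin d y). split. apply Rmin_pos; auto.
    intros a b Ha Hb. pose proof (Rmin_l d y). pose proof (Rmin_r d y). simpl.
    rewrite F_D; auto. apply Rabs_def2 in Hb. lra. apply H; lra.
  - destruct (Rlt_dec (x*x+y*y) (Rb*Rb)) as [Hs'|Hs'].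
    + destruct (s_near_lt (Rb*Rb) x y Hs') as [d [Hd H]]. apply zero_C2. exists d. split; auto.
      intros a b Ha Hb. apply F_nD. specialize (H a b Ha Hb). lra.
    + assert (Hom : inOmega Rb x y) by (unfold inOmega; lra).
      assert (Hneg : n x y < 0) by (apply Hbd; auto; right; unfold onBdry; lra).
      destruct (cont_rel_near n Rb x y Hc Hom (- n x y) ltac:(lra)) as [d [Hd H]].
      apply zero_C2. exists d. split; auto. intros a b Ha Hb.
      destruct (Rlt_dec 0 b) as [Hb0|Hb0]; [destruct (Rlt_dec (Rb*Rb) (a*a+b*b)) as [Hs2|Hs2]|].
      * rewrite F_D; auto. assert (Hn : n a b < 0).
        { assert (Habs := H a b ltac:(unfold inOmega; lra) Ha Hb). apply Rabs_def2 in Habs. lra. }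
        unfold Rmax. destruct Rle_dec; auto. exfalso. apply n0.
        unfold Rdiv. assert (0 < / b) by (apply Rinv_0_lt_compat; lra). nra.
      * apply F_nD. lra.
      * apply F_nD. lra.
  - destruct (Rlt_dec y 0) as [Hy'|Hy'].
    + apply zero_C2. exists (- y). split. lra. intros a b Ha Hb. apply F_nD.
      apply Rabs_def2 in Hb. lra.
    + assert (y = 0) by lra. subst y.
      destruct (Rlt_dec (x*x+0*0) (Rb*Rb)) as [Hs'|Hs'].
      * destruct (s_near_lt (Rb*Rb) x 0 Hs') as [d [Hd H]]. apply zero_C2. exists d. split; auto.
        intros a b Ha Hb. apply F_nD. specialize (H a b Ha Hb). lra.
      * assert (Hom : inOmega Rb x 0) by (unfold inOmega; lra).
        assert (Hneg : n x 0 < 0) by (apply Hbd; auto).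
        destruct (cont_rel_near n Rb x 0 Hc Hom (- n x 0) ltac:(lra)) as [d [Hd H]].
        apply zero_C2. exists d. split; auto. intros a b Ha Hb.
        destruct (Rlt_dec 0 b) as [Hb0|Hb0]; [destruct (Rlt_dec (Rb*Rb) (a*a+b*b)) as [Hs2|Hs2]|].
        -- rewrite F_D; auto. assert (Hn : n a b < 0).
           { assert (Habs := H a b ltac:(unfold inOmega; lra) Ha Hb). apply Rabs_def2 in Habs. lra. }
           unfold Rmax. destruct Rle_dec; auto. exfalso. apply n0.
           unfold Rdiv. assert (0 < / b) by (apply Rinv_0_lt_compat; lra). nra.
        -- apply F_nD. lra.
        -- apply F_nD. lra.
Qed.
Lemma MP (Rb : R) (n nx ny nxx nyy : R -> R -> R) :
  0 < Rb ->
  cont_on n (inOmega Rb) ->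
  (forall x y, inOmega Rb x y -> (y = 0 \/ onBdry Rb x y) -> n x y < 0) ->
  (exists R1, 0 < R1 /\ forall x y, inOmega Rb x y -> R1*R1 <= x*x+y*y -> n x y <= 0) ->
  is_dx n nx (inInt Rb) -> is_dx nx nxx (inInt Rb) ->
  is_dy n ny (inInt Rb) -> is_dy ny nyy (inInt Rb) ->
  (forall x y, inInt Rb x y -> 0 < y -> 0 < nxx x y + nyy x y - (x * nx x y + y * ny x y) + n x y) ->
  forall x y, inOmega Rb x y -> 0 < y -> n x y <= 0.
Proof.
  intros HR Hc Hbd [R1 [HR1 Hgr]] Hdx Hdxx Hdy Hdyy HL x1 y1 Hom1 Hy1.
  destruct (Rle_dec (n x1 y1) 0) as [Hle|Hn1]; auto. exfalso. apply Rnot_le_lt in Hn1.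
  assert (Hs1 : Rb*Rb < x1*x1+y1*y1).
  { unfold inOmega in Hom1. destruct Hom1 as [H|H]; auto. exfalso.
    assert (n x1 y1 < 0) by (apply Hbd; [unfold inOmega; lra| right; unfold onBdry; lra]). lra. }
  set (R2 := R1 + Rabs x1 + Rabs y1 + 1).
  assert (HR2a : 0 <= Rabs x1) by apply Rabs_pos. assert (HR2b : 0 <= Rabs y1) by apply Rabs_pos.
  destruct (evt2 (Fq Rb n) (- R2) R2 0 R2 ltac:(unfold R2; lra) ltac:(unfold R2; lra)
              (F_cont Rb n Hc Hbd)) as [x0 [y0 [Hx0 [Hy0 Hmax]]]].
  assert (HF1 : Fq Rb n x1 y1 = n x1 y1 / y1).
  { rewrite F_D; auto. unfold Rmax. destruct Rle_dec as [Hq|Hq]; auto. exfalso.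
    assert (0 < n x1 y1 / y1) by (apply Rdiv_lt_0_compat; auto). lra. }
  assert (HF1p : 0 < Fq Rb n x1 y1) by (rewrite HF1; apply Rdiv_lt_0_compat; auto).
  assert (Hm1 : Fq Rb n x1 y1 <= Fq Rb n x0 y0).
  { apply Hmax.
    - pose proof (Rle_abs x1). pose proof (Rle_abs (- x1)). rewrite Rabs_Ropp in *. unfold R2; lra.
    - pose proof (Rle_abs y1). unfold R2; lra. }
  assert (HD0 : 0 < y0 /\ Rb*Rb < x0*x0+y0*y0).
  { destruct (Classical_Prop.classic (0 < y0 /\ Rb*Rb < x0*x0+y0*y0)) as [H|H]; auto.
    rewrite (F_nD Rb n x0 y0 H) in Hm1. lra. }
  destruct HD0 as [Hy0p Hs0].
  set (phi := n x0 y0 / y0).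
  assert (HF0 : Fq Rb n x0 y0 = phi).
  { assert (Hm1' : 0 < Fq Rb n x0 y0) by lra.
    rewrite F_D in Hm1' |- *; auto. unfold Rmax in *. unfold phi. destruct Rle_dec; lra. }
  assert (Hphi : 0 < phi) by lra.
  assert (Hn0 : n x0 y0 = phi * y0) by (unfold phi; field; lra).
  assert (Hglob : forall a b, 0 < b -> Rb*Rb < a*a+b*b -> n a b <= phi * b).
  { intros a b Hb Hs. destruct (Rle_dec (n a b) 0) as [H|H]. nra.
    apply Rnot_le_lt in H.
    assert (Hsm : a*a+b*b < R1*R1).
    { destruct (Rlt_dec (a*a+b*b) (R1*R1)) as [H'|H']; auto. exfalso.
      assert (n a b <= 0) by (apply Hgr; [unfold inOmega; lra| lra]). lra. }
    assert (Ha : - R2 <= a <= R2) by (unfold R2; split; nra).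
    assert (Hb2 : 0 <= b <= R2) by (unfold R2; split; nra).
    specialize (Hmax a b Ha Hb2). rewrite HF0, F_D in Hmax; auto.
    assert (n a b / b <= phi) by (eapply Rle_trans; [apply Rmax_l| apply Hmax]).
    apply (Rmult_le_compat_r b) in H0; [|lra]. unfold Rdiv in H0.
    rewrite Rmult_assoc, Rinv_l in H0; lra. }
  destruct (s_near_gt (Rb*Rb) x0 y0 Hs0) as [d1 [Hd1 Hnear]].
  set (d := Rmin d1 y0).
  assert (Hd : 0 < d) by (apply Rmin_pos; lra).
  assert (Hdd1 : d <= d1) by apply Rmin_l. assert (Hdy0 : d <= y0) by apply Rmin_r.
  assert (HinD : forall a b, Rabs (a - x0) < d -> Rabs (b - y0) < d -> 0 < b /\ inInt Rb a b).
  { intros a b Ha Hb. split. apply Rabs_def2 in Hb. lra. unfold inInt. apply Hnear; lra. }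
  assert (Hz : Rabs (x0 - x0) < d) by (rewrite Rminus_diag, Rabs_R0; lra).
  assert (Hzy : Rabs (y0 - y0) < d) by (rewrite Rminus_diag, Rabs_R0; lra).
  destruct (sdt (fun t => n t y0) (fun t => nx t y0) (nxx x0 y0) x0 d Hd) as [Hx1 Hx2].
  { intros t Ht. apply Hdx. apply (HinD t y0 Ht Hzy). }
  { apply Hdxx. apply (HinD x0 y0 Hz Hzy). }
  { intros t Ht. destruct (HinD t y0 Ht Hzy) as [_ Hi]. rewrite Hn0. apply Hglob; auto. }
  destruct (sdt (fun s => n x0 s - phi * s) (fun s => ny x0 s - phi) (nyy x0 y0) y0 d Hd) as [Hy1' Hy2].
  { intros s Hs. destruct (HinD x0 s Hz Hs) as [_ Hi].
    apply derivable_pt_lim_minus. apply Hdy; auto.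
    replace phi with (phi * 1) at 2 by ring. apply derivable_pt_lim_scal. apply derivable_pt_lim_id. }
  { replace (nyy x0 y0) with (nyy x0 y0 - 0) by ring. apply derivable_pt_lim_minus.
    apply Hdyy. apply (HinD x0 y0 Hz Hzy). apply derivable_pt_lim_const. }
  { intros s Hs. destruct (HinD x0 s Hz Hs) as [Hs' Hi]. simpl.
    assert (n x0 s <= phi * s) by (apply Hglob; auto). lra. }
  assert (HL0 := HL x0 y0 (proj2 (HinD x0 y0 Hz Hzy)) Hy0p).
  simpl in Hx1, Hy1'. rewrite Hx1 in HL0. assert (ny x0 y0 = phi) by lra.
  rewrite H in HL0. rewrite Hn0 in HL0. lra.
Qed.
Lemma nrm_ge Rb x y : 0 < Rb -> inOmega Rb x y -> Rb <= nrm x y.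
Proof.
  intros H1 H2. unfold nrm, inOmega in *. rewrite <- (sqrt_square Rb) by lra.
  apply sqrt_le_1_alt. lra.
Qed.

Lemma nrm_sq x y : nrm x y * nrm x y = x*x+y*y.
Proof. unfold nrm. apply sqrt_sqrt. nra. Qed.

Lemma g_low kp ep Rb x y : 0 < Rb -> 0 <= kp -> inOmega Rb x y ->
  ep * (x*x+y*y) <= g kp ep Rb x y.
Proof.
  intros H1 H2 H3. unfold g. pose proof (nrm_ge Rb x y H1 H3) as Hr.
  assert (nrm x y - Rb*Rb/nrm x y = (nrm x y * nrm x y - Rb*Rb)/nrm x y) by (field; lra).
  rewrite H. assert (0 <= (nrm x y * nrm x y - Rb * Rb) / nrm x y).
  { apply Rmult_le_pos. nra. left. apply Rinv_0_lt_compat. lra. }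
  nra.
Qed.

Lemma OS (Rb K C : R) (v vx vy vxx vyy : R -> R -> R) :
  0 < Rb -> 1 < 2*Rb*Rb -> 0 <= K ->
  cont_on v (inOmega Rb) ->
  (forall x, inOmega Rb x 0 -> v x 0 = 0) ->
  (forall x y, onBdry Rb x y -> v x y = 0) ->
  (forall x y, inOmega Rb x y -> v x y <= C * nrm x y) ->
  is_dx v vx (inInt Rb) -> is_dx vx vxx (inInt Rb) ->
  is_dy v vy (inInt Rb) -> is_dy vy vyy (inInt Rb) ->
  (forall x y, inInt Rb x y -> - K / nrm x y <= vxx x y + vyy x y - (x * vx x y + y * vy x y) + v x y) ->
  forall x y, inOmega Rb x y -> 0 < y -> v x y <= K / (2*Rb^2 - 1) * nrm x y.
Proof.
  intros HR HA HK Hc H0 Hbd Hgr Hdx Hdxx Hdy Hdyy HL x1 y1 Hom1 Hy1.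
  set (A := 2*Rb*Rb - 1). assert (HA' : 0 < A) by (unfold A; lra).
  replace (2*Rb^2 - 1) with A by (unfold A; ring).
  set (k := K / A). assert (Hk : 0 <= k) by (unfold k; apply Rmult_le_pos; [lra| left; apply Rinv_0_lt_compat; lra]).
  assert (HkA : k * A = K) by (unfold k; field; lra).
  set (r1 := nrm x1 y1). assert (Hr1 : Rb <= r1) by (apply nrm_ge; auto).
  destruct (Rle_dec (v x1 y1) (k * r1)) as [Hle|Hgt]; auto. exfalso. apply Rnot_le_lt in Hgt.
  set (gap := v x1 y1 - k * r1). assert (Hgap : 0 < gap) by (unfold gap; lra).
  set (dl := gap / (2 * (r1 + A * r1 * r1 + 1))).
  assert (Hden : 0 < 2 * (r1 + A * r1 * r1 + 1)) by nra.
  assert (Hdl : 0 < dl) by (unfold dl; apply Rdiv_lt_0_compat; lra).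
  set (ep := dl * A / 8). assert (Hep : 0 < ep) by (unfold ep; nra).
  set (kp := k + dl). assert (Hkp : 0 <= kp) by (unfold kp; lra).
  assert (Hmp := MP Rb (fun x y => v x y - g kp ep Rb x y)
     (fun x y => vx x y - gx kp ep Rb x y) (fun x y => vy x y - gy kp ep Rb x y)
     (fun x y => vxx x y - gxx kp ep Rb x y) (fun x y => vyy x y - gyy kp ep Rb x y) HR).
  assert (Hpos : forall x y, inOmega Rb x y -> 0 < x*x+y*y).
  { intros x y H. unfold inOmega in H. nra. }
  assert (Hposi : forall x y, inInt Rb x y -> 0 < x*x+y*y).
  { intros x y H. unfold inInt in H. nra. }
  assert (Hn1 : v x1 y1 - g kp ep Rb x1 y1 <= 0).
  { apply Hmp; auto.
    -
      intros x y Hxy eps He.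
      destruct (Hc x y Hxy (eps/2) ltac:(lra)) as [d1 [Hd1 H1]].
      destruct (C2_eps (g kp ep Rb) x y (cg kp ep Rb (x,y) (Hpos x y Hxy)) (eps/2) ltac:(lra)) as [d2 [Hd2 H2]].
      exists (Rmin d1 d2). split. apply Rmin_pos; auto.
      intros a b Hab Hd. pose proof (Rmin_l d1 d2). pose proof (Rmin_r d1 d2).
      unfold dist2 in Hd. destruct (comp_le (a - x) (b - y)) as [Ca Cb].
      assert (E1 := H1 a b Hab ltac:(unfold dist2; lra)).
      assert (E2 := H2 a b ltac:(lra) ltac:(lra)).
      apply Rabs_def2 in E1. apply Rabs_def2 in E2. apply Rabs_def1; lra.
    - intros x y Hxy [Hy|Hb].
      + subst y. rewrite H0; auto. pose proof (g_low kp ep Rb x 0 HR Hkp Hxy).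
        pose proof (Hpos x 0 Hxy). nra.
      + rewrite Hbd; auto. pose proof (g_low kp ep Rb x y HR Hkp Hxy).
        pose proof (Hpos x y Hxy). nra.
    - exists (Rabs C / ep + 1). split.
      { assert (0 <= Rabs C / ep) by (apply Rmult_le_pos; [apply Rabs_pos| left; apply Rinv_0_lt_compat; lra]). lra. }
      intros x y Hxy Hs. pose proof (g_low kp ep Rb x y HR Hkp Hxy). pose proof (Hgr x y Hxy).
      assert (Hr : Rabs C / ep + 1 <= nrm x y).
      { unfold nrm. rewrite <- (sqrt_square (Rabs C / ep + 1)).
        apply sqrt_le_1_alt. lra.
        assert (0 <= Rabs C / ep) by (apply Rmult_le_pos; [apply Rabs_pos| left; apply Rinv_0_lt_compat; lra]). lra. }
      rewrite <- nrm_sq in H.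
      assert (HC : C <= Rabs C) by apply Rle_abs.
      assert (HCe : Rabs C = ep * (Rabs C / ep)) by (field; lra).
      assert (0 <= Rabs C / ep) by (apply Rmult_le_pos; [apply Rabs_pos| left; apply Rinv_0_lt_compat; lra]).
      assert (Hrp : 0 < nrm x y) by lra.
      assert (C * nrm x y <= ep * (nrm x y * nrm x y)).
      { apply Rle_trans with (Rabs C * nrm x y). apply Rmult_le_compat_r; lra.
        rewrite HCe. rewrite Rmult_assoc. apply Rmult_le_compat_l. lra. apply Rmult_le_compat_r; lra. }
      lra.
    - intros x y Hxy. apply derivable_pt_lim_minus. apply Hdx; auto. apply g_dx. apply Hposi; auto.
    - intros x y Hxy. apply derivable_pt_lim_minus. apply Hdxx; auto. apply g_dxx. apply Hposi; auto.
    - intros x y Hxy. apply derivable_pt_lim_minus. apply Hdy; auto. apply g_dy. apply Hposi; auto.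
    - intros x y Hxy. apply derivable_pt_lim_minus. apply Hdyy; auto. apply g_dyy. apply Hposi; auto.
    - intros x y Hxy Hy.
      assert (HLg := Lg_eq kp ep Rb x y (Hposi x y Hxy)).
      assert (HLv := HL x y Hxy).
      pose proof (nrm_ge Rb x y HR ltac:(unfold inOmega, inInt in *; lra)) as Hr.
      set (r := nrm x y) in *.
      assert (Hr0 : 0 < r) by lra.
      assert (Hr3 : 0 < r ^ 3) by (apply pow_lt; lra).
      assert (T1 : 0 <= kp * Rb * Rb / r ^ 3).
      { unfold Rdiv. apply Rmult_le_pos. apply Rmult_le_pos. nra. lra. left. apply Rinv_0_lt_compat; lra. }
      assert (T2 : dl * A / r - ep * (4 - r * r) = dl * A * (8 - 4*r + r*r*r) / (8 * r)) by (unfold ep; field; lra).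
      assert (T3 : 0 < dl * A * (8 - 4*r + r*r*r) / (8 * r)).
      { apply Rdiv_lt_0_compat; [|lra]. apply Rmult_lt_0_compat. nra.
        destruct (Rle_dec r 2); nra. }
      assert (T4 : - K / r - (kp * (1 - 2 * Rb * Rb) / r - kp * Rb * Rb / r ^ 3 + ep * (4 - r * r))
                 = dl * A / r - ep * (4 - r * r) + kp * Rb * Rb / r ^ 3).
      { rewrite <- HkA. unfold kp, A. field. lra. }
      lra. }
  assert (Hg1 : g kp ep Rb x1 y1 <= kp * r1 + ep * (r1 * r1)).
  { unfold g. fold r1. rewrite <- nrm_sq. fold r1.
    assert (0 <= Rb*Rb/r1) by (apply Rmult_le_pos; [nra| left; apply Rinv_0_lt_compat; lra]). nra. }
  assert (Hfin : kp * r1 + ep * (r1 * r1) < k * r1 + gap).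
  { unfold kp, ep. assert (dl * (r1 + A * r1 * r1 / 8) < gap).
    { replace (dl * (r1 + A * r1 * r1 / 8)) with (gap * ((r1 + A * r1 * r1 / 8) / (2 * (r1 + A * r1 * r1 + 1)))) by (unfold dl; field; lra).
      assert (Hq : (r1 + A * r1 * r1 / 8) / (2 * (r1 + A * r1 * r1 + 1)) < 1).
      { unfold Rdiv. apply (Rmult_lt_reg_r (2 * (r1 + A * r1 * r1 + 1))); auto.
        rewrite Rmult_assoc, Rinv_l, Rmult_1_r, Rmult_1_l; [|lra]. nra. }
      nra. }
    nra. }
  unfold gap in Hfin. lra.
Qed.
Lemma cont_opp (f : R -> R -> R) U : cont_on f U -> cont_on (fun x y => - f x y) U.
Proof.
  intros H x y Hxy eps He. destruct (H x y Hxy eps He) as [d [Hd Hp]]. exists d. split; auto.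
  intros a b Hab Hdd. replace (- f a b - - f x y) with (- (f a b - f x y)) by ring.
  rewrite Rabs_Ropp. auto.
Qed.
Lemma dx_opp f g U : is_dx f g U -> is_dx (fun x y => - f x y) (fun x y => - g x y) U.
Proof. intros H x y Hxy. apply (derivable_pt_lim_opp (fun t => f t y)). apply H; auto. Qed.
Lemma dy_opp f g U : is_dy f g U -> is_dy (fun x y => - f x y) (fun x y => - g x y) U.
Proof. intros H x y Hxy. apply (derivable_pt_lim_opp (fun t => f x t)). apply H; auto. Qed.

Theorem mainTheorem8 (m : nat) (alpha Rb : R)
  (E v vx vy vxx vxy vyx vyy : R -> R -> R) (K : R) :
  (1 <= m)%nat ->
  0 < alpha < 1 ->
  1 / sqrt 2 < Rb ->
  C0a_star Rb alpha m E ->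
  C2a_star Rb alpha m v vx vy vxx vxy vyx vyy ->
  (* Delta v - xi . grad v + v = E in Omega *)
  (forall x y, inInt Rb x y ->
     vxx x y + vyy x y - (x * vx x y + y * vy x y) + v x y = E x y) ->
  (* v = 0 on the boundary of Omega *)
  (forall x y, onBdry Rb x y -> v x y = 0) ->
  (* K = sup_{eta in Omega} |E(eta)| |eta| *)
  is_lub (fun s => exists x y, inOmega Rb x y /\ s = Rabs (E x y) * nrm x y) K ->
  forall x y, inOmega Rb x y ->
    Rabs (v x y) <= K / (2 * Rb ^ 2 - 1) * nrm x y.
Proof.
  intros Hm Ha HRb HE Hv Heq Hbd Hlub.
  destruct Hv as [Hdx [Hdy [Hdxx [_ [_ [Hdyy [Hc [_ [_ [_ [_ [_ [_ [Hw [_ [_ [_ [_ [_ [_ [_ [_ [_ [_ [Hodd _]]]]]]]]]]]]]]]]]]]]]]]]].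
  assert (Hs2 : 0 < sqrt 2) by (apply sqrt_lt_R0; lra).
  assert (Hs22 : sqrt 2 * sqrt 2 = 2) by (apply sqrt_sqrt; lra).
  assert (Hinv : 0 < 1 / sqrt 2) by (apply Rdiv_lt_0_compat; lra).
  assert (HR : 0 < Rb) by lra.
  assert (Hhalf : (1 / sqrt 2) * (1 / sqrt 2) = 1/2) by (rewrite <- Hs22 at 3; field; lra).
  assert (HA : 1 < 2 * Rb * Rb) by nra.
  destruct Hlub as [Hub _].
  assert (HK : 0 <= K).
  { apply Rle_trans with (Rabs (E Rb 0) * nrm Rb 0).
    apply Rmult_le_pos. apply Rabs_pos. unfold nrm. apply sqrt_pos.
    apply Hub. exists Rb, 0. split; [unfold inOmega; lra| auto]. }
  assert (HEb : forall x y, inInt Rb x y -> Rabs (E x y) * nrm x y <= K).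
  { intros x y H. apply Hub. exists x, y. split; auto. unfold inOmega, inInt in *. lra. }
  destruct Hw as [C HC].
  assert (Hgrow : forall x y, inOmega Rb x y -> Rabs (v x y) <= C * nrm x y).
  { intros x y H. specialize (HC x y H). pose proof (nrm_ge Rb x y HR H) as Hr.
    replace (-1) with (- (1)) in HC by ring. rewrite Rpower_Ropp, Rpower_1 in HC by lra.
    replace (Rabs (v x y)) with (Rabs (v x y) * / nrm x y * nrm x y) by (field; lra).
    apply Rmult_le_compat_r; lra. }
  assert (H0 : forall x, inOmega Rb x 0 -> v x 0 = 0).
  { intros x H. pose proof (Hodd x 0 H) as Ho. rewrite Ropp_0 in Ho. lra. }
  assert (Hpos : forall x y, inOmega Rb x y -> 0 < y -> Rabs (v x y) <= K / (2 * Rb ^ 2 - 1) * nrm x y).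
  { intros x y Hxy Hy. apply Rabs_le. split.
    - assert (-v x y <= K / (2 * Rb ^ 2 - 1) * nrm x y); [|lra].
      apply (OS Rb K C (fun x y => - v x y) (fun x y => - vx x y) (fun x y => - vy x y)
               (fun x y => - vxx x y) (fun x y => - vyy x y)); auto.
      + apply cont_opp; auto.
      + intros x' H. rewrite H0; auto. ring.
      + intros x' y' H. rewrite Hbd; auto. ring.
      + intros x' y' H. pose proof (Hgrow x' y' H). pose proof (Rle_abs (- v x' y')). rewrite Rabs_Ropp in *. lra.
      + apply dx_opp; auto. + apply dx_opp; auto. + apply dy_opp; auto. + apply dy_opp; auto.
      + intros x' y' H.
        replace (- vxx x' y' + - vyy x' y' - (x' * - vx x' y' + y' * - vy x' y') + - v x' y')
          with (- (vxx x' y' + vyy x' y' - (x' * vx x' y' + y' * vy x' y') + v x' y')) by ring.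
        rewrite Heq; auto.
        pose proof (HEb x' y' H) as HE1.
        pose proof (nrm_ge Rb x' y' HR ltac:(unfold inOmega, inInt in *; lra)) as Hr.
        assert (E x' y' <= K / nrm x' y').
        { apply (Rmult_le_reg_r (nrm x' y')); [lra|]. unfold Rdiv.
          rewrite Rmult_assoc, Rinv_l, Rmult_1_r; [|lra]. pose proof (Rle_abs (E x' y')). nra. }
        unfold Rdiv in *. lra.
    - apply (OS Rb K C v vx vy vxx vyy); auto.
      + intros x' y' H. pose proof (Hgrow x' y' H). pose proof (Rle_abs (v x' y')). lra.
      + intros x' y' H. rewrite Heq; auto.
        pose proof (HEb x' y' H) as HE1.
        pose proof (nrm_ge Rb x' y' HR ltac:(unfold inOmega, inInt in *; lra)) as Hr.
        apply (Rmult_le_reg_r (nrm x' y')); [lra|]. unfold Rdiv.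
        rewrite Rmult_assoc, Rinv_l, Rmult_1_r; [|lra].
        pose proof (Rle_abs (- E x' y')). rewrite Rabs_Ropp in *. nra. }
  intros x y Hxy.
  destruct (Rtotal_order y 0) as [Hy|[Hy|Hy]].
  - assert (Hxy' : inOmega Rb x (- y)) by (unfold inOmega in *; lra).
    pose proof (Hodd x (- y) Hxy') as Ho. rewrite Ropp_involutive in Ho.
    rewrite Ho, Rabs_Ropp.
    replace (nrm x y) with (nrm x (- y)) by (unfold nrm; f_equal; ring).
    apply Hpos; auto; lra.
  - subst y. rewrite H0, Rabs_R0; auto. apply Rmult_le_pos. unfold Rdiv. apply Rmult_le_pos; auto.
    left. apply Rinv_0_lt_compat. nra. unfold nrm. apply sqrt_pos.
  - apply Hpos; auto.
Qed.
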